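(* Let $p\ge5$ be prime and let $H\le{\rm AGL}(1,p)$ consist of all maps $x\mapsto ax+b$ with $a$ a nonzero quadratic residue modulo $p$ and $b\in\mathbb F_p$. Then $H\wr S_2$, in the product action on $\mathbb F_p^2$, is a primitive group of degree $p^2$ all of whose elements are imprimitive permutations, and it contains the normal subgroup $H\times H$ of index $2$, which is imprimitive.
   Context: For $H\le{\rm Sym}(\Delta)$, $H\wr S_2$ in product action acts on $\Delta^2$ by applying elements of $H$ coordinatewise and possibly swapping the two coordinates. A permutation of a set $\Omega$ of size $n$ is imprimitive if it preserves a partition of $\Omega$ into blocks of equal size $m$ with $1<m<n$; a transitive group is imprimitive if it preserves such a partition. *)

(* Defs.v *)
From HB Require Import structures.
From mathcomp Require Import all_boot all_order all_algebra all_fingroup all_solvable.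
Set Implicit Arguments. Unset Strict Implicit. Unset Printing Implicit Defensive.
Import GRing.Theory.

Definition nz_qr (p : nat) (a : 'F_p) : bool :=
  (a != 0%R) && [exists c : 'F_p, (c ^+ 2)%R == a].

Definition Hqr (p : nat) : {set {perm 'F_p}} :=
  [set s : {perm 'F_p} | [exists a : 'F_p, exists b : 'F_p,
     nz_qr a && [forall x : 'F_p, s x == (a * x + b)%R]]].

Definition wrS2 (p : nat) : {set {perm ('F_p * 'F_p)}} :=
  [set g : {perm ('F_p * 'F_p)} | [exists h1 in Hqr p, exists h2 in Hqr p,
     [forall x, g x == (h1 x.1, h2 x.2)] || [forall x, g x == (h1 x.2, h2 x.1)]]].

Definition baseHH (p : nat) : {set {perm ('F_p * 'F_p)}} :=
  [set g : {perm ('F_p * 'F_p)} | [exists h1 in Hqr p, exists h2 in Hqr p,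
     [forall x, g x == (h1 x.1, h2 x.2)]]].

Definition uniform_block_system (T : finType) (P : {set {set T}}) : Prop :=
  partition P [set: T] /\
  exists m : nat, 1 < m < #|T| /\ forall B, B \in P -> #|B| = m.

Definition perm_imprimitive (T : finType) (g : {perm T}) : Prop :=
  exists P : {set {set T}}, uniform_block_system P /\
    forall B, B \in P -> [set g x | x in B] \in P.

Definition group_imprimitive (T : finType) (K : {set {perm T}}) : Prop :=
  [transitive K, on [set: T] | 'P] /\
  exists P : {set {set T}}, uniform_block_system P /\
    forall g, g \in K -> forall B, B \in P -> [set g x | x in B] \in P.

(* Main.v *)
Require Import Defs.
From mathcomp Require Import all_boot all_order all_algebra all_fingroup all_solvable.
From mathcomp Require Import ring zify.
Set Implicit Arguments. Unset Strict Implicit. Unset Printing Implicit Defensive.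
Import GRing.Theory.


Lemma HqrP p (s : {perm 'F_p}) :
  reflect (exists a b : 'F_p, [/\ a != 0%R, exists c : 'F_p, (c ^+ 2)%R = a &
             forall x, s x = (a * x + b)%R]) (s \in Hqr p).
Proof.
rewrite inE; apply: (iffP existsP) => [[a /existsP [b /andP[/andP [a0 /existsP [c /eqP hc]] /forallP h]]] | [a [b [a0 [c hc] h]]]].
  by exists a, b; split => // [|x]; [exists c | apply/eqP].
exists a; apply/existsP; exists b; rewrite /nz_qr a0 /=; apply/andP; split.
  by apply/existsP; exists c; rewrite hc.
by apply/forallP => x; rewrite h.
Qed.

Lemma Hqr1 p : (1%g : {perm 'F_p}) \in Hqr p.
Proof.
apply/HqrP; exists 1%R, 0%R; split; first exact: oner_neq0.
  by exists 1%R; rewrite expr1n.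
by move=> x; rewrite perm1 mul1r addr0.
Qed.

Lemma HqrM p (s t : {perm 'F_p}) : s \in Hqr p -> t \in Hqr p -> (s * t)%g \in Hqr p.
Proof.
move=> /HqrP [a1 [b1 [a10 [c1 hc1] h1]]] /HqrP [a2 [b2 [a20 [c2 hc2] h2]]].
apply/HqrP; exists (a2 * a1)%R, (a2 * b1 + b2)%R; split.
- by rewrite mulf_neq0.
- by exists (c2 * c1)%R; rewrite exprMn hc1 hc2.
by move=> x; rewrite permM h1 h2; ring.
Qed.

Lemma wrS2P p (g : {perm 'F_p * 'F_p}) :
  reflect (exists h1, exists h2, [/\ h1 \in Hqr p, h2 \in Hqr p &
     (forall x, g x = (h1 x.1, h2 x.2)) \/ (forall x, g x = (h1 x.2, h2 x.1))])
   (g \in wrS2 p).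
Proof.
rewrite inE; apply: (iffP exists_inP) => [[h1 H1 /exists_inP [h2 H2 /orP[/forallP h|/forallP h]]] | [h1 [h2 [H1 H2 [h|h]]]]].
- by exists h1, h2; split => //; left => x; apply/eqP.
- by exists h1, h2; split => //; right => x; apply/eqP.
- by exists h1 => //; apply/exists_inP; exists h2 => //; apply/orP; left; apply/forallP => x; rewrite h.
- by exists h1 => //; apply/exists_inP; exists h2 => //; apply/orP; right; apply/forallP => x; rewrite h.
Qed.

Lemma baseP p (g : {perm 'F_p * 'F_p}) :
  reflect (exists h1, exists h2, [/\ h1 \in Hqr p, h2 \in Hqr p &
     (forall x, g x = (h1 x.1, h2 x.2))]) (g \in baseHH p).
Proof.
rewrite inE; apply: (iffP exists_inP) => [[h1 H1 /exists_inP [h2 H2 /forallP h]] | [h1 [h2 [H1 H2 h]]]].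
- by exists h1, h2; split => // x; apply/eqP.
- by exists h1 => //; apply/exists_inP; exists h2 => //; apply/forallP => x; rewrite h.
Qed.

Lemma base_sub p : baseHH p \subset wrS2 p.
Proof.
apply/subsetP => g /baseP [h1 [h2 [H1 H2 h]]]; apply/wrS2P; exists h1, h2; split => //; by left.
Qed.

Lemma wrS2_gs p : group_set (wrS2 p).
Proof.
apply/group_setP; split.
  by apply/wrS2P; exists 1%g, 1%g; split; try exact: Hqr1; left => x; rewrite !perm1; case: x.
move=> g k /wrS2P [h1 [h2 [H1 H2 hg]]] /wrS2P [k1 [k2 [K1 K2 hk]]].
apply/wrS2P; case: hg => hg; case: hk => hk.
- exists (h1 * k1)%g, (h2 * k2)%g; split; try exact: HqrM; left => x.
  by rewrite permM hg hk /= !permM.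
- exists (h2 * k1)%g, (h1 * k2)%g; split; try exact: HqrM; right => x.
  by rewrite permM hg hk /= !permM.
- exists (h1 * k1)%g, (h2 * k2)%g; split; try exact: HqrM; right => x.
  by rewrite permM hg hk /= !permM.
- exists (h2 * k1)%g, (h1 * k2)%g; split; try exact: HqrM; left => x.
  by rewrite permM hg hk /= !permM.
Qed.

Lemma base_gs p : group_set (baseHH p).
Proof.
apply/group_setP; split.
  by apply/baseP; exists 1%g, 1%g; split; try exact: Hqr1; move=> x; rewrite !perm1; case: x.
move=> g k /baseP [h1 [h2 [H1 H2 hg]]] /baseP [k1 [k2 [K1 K2 hk]]].
apply/baseP; exists (h1 * k1)%g, (h2 * k2)%g; split; try exact: HqrM => x.
by move=> x; rewrite permM hg hk /= !permM.
Qed.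



Definition Wg p := Group (wrS2_gs p).
Definition Kg p := Group (base_gs p).

Lemma swap_inj (T : finType) : injective (fun x : T * T => (x.2, x.1)).
Proof. by apply: (can_inj (g := fun x : T * T => (x.2, x.1))); case. Qed.
Definition swp (T : finType) : {perm T * T} := perm (@swap_inj T).
Lemma swpE (T : finType) (x : T * T) : swp T x = (x.2, x.1).
Proof. by rewrite permE. Qed.

Lemma swpV (T : finType) (x : T * T) : (swp T)^-1%g x = (x.2, x.1).
Proof.
apply: (@perm_inj _ (swp T)); rewrite permKV swpE /=; by case: x.
Qed.

Lemma wrS2_minus p : 1 < p -> wrS2 p :\: baseHH p = (baseHH p :* swp _)%g.
Proof.
move=> p1; apply/setP => g; rewrite inE mem_rcoset.
apply/andP/idP => [[nK /wrS2P [h1 [h2 [H1 H2 [hg|hg]]]]] | hK].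
- by case/negP: nK; apply/baseP; exists h1, h2.
- apply/baseP; exists h2, h1; split => // x; by rewrite permM hg swpV.
have hgs x : g x = swp _ ((g * (swp _)^-1)%g x).
  by rewrite permM permKV.
case/baseP: hK => [k1 [k2 [K1 K2 hk]]]; split; last first.
  by apply/wrS2P; exists k2, k1; split => //; right => x; rewrite hgs hk swpE.
apply/negP => /baseP [h1 [h2 [_ _ h]]].
have e0 := hgs (0, 0)%R; have e1 := hgs (1, 0)%R.
rewrite hk swpE h /= in e0; rewrite hk swpE h /= in e1.
case: e0 => e0 _; case: e1 => e1 _.
have : h1 (0%R : 'F_p) = h1 1%R by rewrite e0 e1.
move/perm_inj/eqP; by rewrite eq_sym oner_eq0.
Qed.

Lemma card_wrS2 p : 1 < p -> #|wrS2 p| = (#|baseHH p| * 2)%N.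
Proof.
move=> p1; rewrite -(cardsID (baseHH p) (wrS2 p)) wrS2_minus //.
rewrite (setIidPr (base_sub p)) card_rcoset.
by rewrite muln2 addnn.
Qed.

Lemma index_base p : 1 < p -> #|wrS2 p : baseHH p|%g = 2.
Proof.
move=> p1; have := Lagrange (base_sub p : Kg p \subset Wg p).
rewrite /= card_wrS2 // => /eqP.
by rewrite eqn_pmul2l ?(cardG_gt0 (Kg p)) // => /eqP.
Qed.

Lemma base_normal p : 1 < p -> (baseHH p <| wrS2 p)%g.
Proof.
move=> p1; exact: (index2_normal (G := Wg p) (H := Kg p) (base_sub p) (index_base p1)).
Qed.



Definition fib p (b : 'F_p) (z : 'F_p * 'F_p) : 'F_p := (z.1 + b * z.2)%R.

Lemma card_fiber p (hp : prime p) (b c : 'F_p) : #|[set y | c == fib b y]| = p.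
Proof.
have inj : injective (fun t : 'F_p => (c - b * t, t)%R).
  by move=> s t [].
have -> : [set y | c == fib b y] = [set (c - b * t, t)%R | t in [set: 'F_p]].
  apply/setP => y; rewrite !inE /fib; apply/eqP/imsetP => [-> | [t _ ->]].
    by exists y.2; [rewrite inE | rewrite addrK; case: y].
  by rewrite /= subrK.
by rewrite card_imset // cardsT card_Fp.
Qed.

Definition fibP p (b : 'F_p) := preim_partition (fib b) [set: 'F_p * 'F_p].

Lemma fibP_mem p (b : 'F_p) B : B \in fibP b -> exists x, B = [set y | fib b x == fib b y].
Proof.
rewrite /fibP /preim_partition /equivalence_partition => /imsetP [x _ ->].
exists x; apply/setP => y; by rewrite !inE.
Qed.

Lemma card_sq p : prime p -> #|[set: 'F_p * 'F_p]| = p ^ 2.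
Proof. by move=> hp; rewrite cardsT card_prod card_Fp. Qed.

Lemma fiber_ubs p (hp : prime p) (b : 'F_p) : uniform_block_system (fibP b).
Proof.
split; first exact: preim_partitionP.
exists p; split.
  rewrite -cardsT card_sq // prime_gt1 //=.
  have := prime_gt1 hp; rewrite expnS; move=> h. 
  by rewrite -{1}(muln1 p) ltn_mul2l; rewrite (ltnW h) /= expn1.
move=> B /fibP_mem [x ->]; exact: card_fiber.
Qed.

Lemma fiber_pres p (hp : prime p) (b : 'F_p) (g : {perm 'F_p * 'F_p}) (psi : 'F_p -> 'F_p) :
  (forall z, fib b (g z) = psi (fib b z)) ->
  forall B, B \in fibP b -> [set g x | x in B] \in fibP b.
Proof.
move=> hg B /fibP_mem [x ->].
have -> : [set g x0 | x0 in [set y | fib b x == fib b y]] = [set y | fib b (g x) == fib b y].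
  apply/eqP; rewrite eqEcard card_imset; last exact: perm_inj.
  rewrite !card_fiber // leqnn andbT.
  apply/subsetP => z /imsetP [y]; rewrite !inE => /eqP hy ->.
  by rewrite !hg hy.
rewrite /fibP /preim_partition /equivalence_partition.
apply/imsetP; exists (g x); first by rewrite inE.
by apply/setP => y; rewrite !inE.
Qed.

Lemma wr_imprim p (hp : prime p) g : g \in wrS2 p -> perm_imprimitive g.
Proof.
case/wrS2P => [h1 [h2 [/HqrP [a1 [b1 [a10 [c1 hc1] e1]]] /HqrP [a2 [b2 [a20 [c2 hc2] e2]]] [hg|hg]]]].
  exists (fibP 0%R); split; first exact: fiber_ubs.
  apply: (fiber_pres hp (psi := h1)) => z; by rewrite hg /fib /= !mul0r !addr0.
have c20 : c2 != 0%R by apply: contraNneq a20 => c0; rewrite -hc2 c0 expr0n.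
exists (fibP (c1 / c2)%R); split; first exact: fiber_ubs.
apply: (fiber_pres hp (psi := fun t => c1 * c2 * t + (b1 + c1 / c2 * b2))%R) => z.
rewrite hg /fib /= e1 e2 -hc1 -hc2; field; exact: c20.
Qed.



Lemma Fp_val p (k : 'F_p) : k = ((val k)%:R)%R.
Proof. by rewrite natr_Zp. Qed.

Lemma Fp_nat_neq0 p (hp : prime p) n : 0 < n < p -> (n%:R : 'F_p)%R != 0%R.
Proof.
move=> /andP [n0 np]; apply/eqP => h.
have := val_Fp_nat hp n; rewrite h modn_small //= => e; rewrite -e in n0.
by rewrite ltnn in n0.
Qed.

Definition affp p (a b : 'F_p) : {perm 'F_p} :=
  if (a != 0%R) =P true is ReflectT ha then perm (fun x y (e : (a * x + b = a * y + b)%R) => mulfI ha (addIr b e)) else 1%g.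

Lemma affpE p (a b x : 'F_p) : a != 0%R -> affp a b x = (a * x + b)%R.
Proof. by rewrite /affp => ha; case: eqP => // h; rewrite permE. Qed.

Lemma affp_Hqr p (c b : 'F_p) : c != 0%R -> affp (c ^+ 2)%R b \in Hqr p.
Proof.
move=> c0; have a0 : (c ^+ 2 != 0)%R by rewrite expf_neq0.
apply/HqrP; exists (c ^+ 2)%R, b; split => //; first by exists c.
by move=> x; rewrite affpE.
Qed.

Lemma pc_inj (T : finType) (h1 h2 : {perm T}) : injective (fun z : T * T => (h1 z.1, h2 z.2)).
Proof. by move=> [x1 x2] [y1 y2] /= [/perm_inj -> /perm_inj ->]. Qed.
Definition pc (T : finType) (h1 h2 : {perm T}) : {perm T * T} := perm (@pc_inj T h1 h2).
Lemma pcE (T : finType) (h1 h2 : {perm T}) z : pc h1 h2 z = (h1 z.1, h2 z.2).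
Proof. by rewrite permE. Qed.

Lemma pc_in p (h1 h2 : {perm 'F_p}) : h1 \in Hqr p -> h2 \in Hqr p -> pc h1 h2 \in baseHH p.
Proof. by move=> H1 H2; apply/baseP; exists h1, h2; split => // z; rewrite pcE. Qed.

Lemma swp_in p : swp _ \in wrS2 p.
Proof. by apply/wrS2P; exists 1%g, 1%g; split; try exact: Hqr1; right => z; rewrite swpE !perm1. Qed.

Definition trp p (w : 'F_p * 'F_p) := pc (affp 1%R w.1) (affp 1%R w.2).
Lemma trpE p (w z : 'F_p * 'F_p) : trp w z = (z.1 + w.1, z.2 + w.2)%R.
Proof. by rewrite pcE !affpE ?oner_neq0 // !mul1r. Qed.
Lemma trp_in p (w : 'F_p * 'F_p) : trp w \in baseHH p.
Proof. by apply: pc_in; rewrite -(expr1n _ 2); apply: affp_Hqr; rewrite oner_neq0. Qed.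

Lemma trans_of p (A : {set {perm 'F_p * 'F_p}}) :
  baseHH p \subset A -> [transitive A, on [set: 'F_p * 'F_p] | 'P].
Proof.
move=> sA; apply/imsetP; exists (0, 0)%R; first by rewrite inE.
apply/setP => y; rewrite inE; apply/esym/orbitP; exists (trp y).
  exact: (subsetP sA _ (trp_in y)).
by rewrite /= apermE trpE /= !add0r; case: y.
Qed.

Lemma base_imprim p (hp : prime p) : group_imprimitive (baseHH p).
Proof.
split; first exact: trans_of.
exists (fibP 0%R); split; first exact: fiber_ubs.
move=> g /baseP [h1 [h2 [_ _ hg]]].
apply: (fiber_pres hp (psi := h1)) => z; by rewrite hg /fib /= !mul0r !addr0.
Qed.



Lemma prim p (hp : prime p) (p5 : 4 < p) : [primitive wrS2 p, on [set: 'F_p * 'F_p] | 'P].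
Proof.
apply/andP; split; first exact: trans_of (base_sub p).
apply/existsP => [[Q /and3P [partQ actQ /andP [Q1 Q2]]]].
have [/eqP covQ tiQ n0Q] := and3P partQ.
pose B := pblock Q (0, 0)%R.
have QB : B \in Q by rewrite pblock_mem // covQ inE.
have Bo : (0, 0)%R \in B by rewrite mem_pblock covQ inE.
have imQ : forall g, g \in wrS2 p -> forall Y, Y \in Q -> [set g x | x in Y] \in Q.
  move=> g Wg Y QY; have := (actsP actQ) g Wg Y; rewrite QY /=.
  by move=> h; exact: h.
have clos : forall g, g \in wrS2 p -> forall z0, z0 \in B -> g z0 \in B ->
    forall z, z \in B -> g z \in B.
  move=> g Wg z0 Bz0 Bgz0 z Bz.
  have : pblock Q (g z0) = [set g x | x in B].
    by apply: def_pblock => //; [exact: imQ | exact: imset_f].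
  rewrite (def_pblock tiQ QB Bgz0) => e.
  have : g z \in [set g x | x in B] by exact: imset_f.
  by rewrite -e.
have allQ : (forall z, z \in B) -> False.
  move=> hB; have : Q \subset [set B].
    apply/subsetP => Y QY; have /set0Pn [y Yy] : Y != set0.
      by apply: contraNneq n0Q => <-.
    by rewrite inE -(def_pblock tiQ QY Yy) (def_pblock tiQ QB (hB y)).
  move/subset_leq_card; rewrite cards1 => h; by rewrite ltnNge h in Q1.
have single : (forall z, z \in B -> z = (0, 0)%R) -> False.
  move=> hB.
  have B1 : B = [set (0, 0)%R] by apply/setP => z; rewrite inE; apply/idP/eqP => [/hB | ->].
  have cY : forall Y, Y \in Q -> #|Y| = 1.
    move=> Y QY; have /set0Pn [y Yy] : Y != set0.
      by apply: contraNneq n0Q => <-.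
    have : pblock Q y = [set trp y x | x in B].
      apply: def_pblock => //; first exact: (imQ _ (subsetP (base_sub p) _ (trp_in y))).
      by apply/imsetP; exists (0, 0)%R => //; rewrite trpE /= !add0r; case: y {Yy}.
    rewrite (def_pblock tiQ QY Yy) => ->; by rewrite card_imset ?B1 ?cards1 //; exact: perm_inj.
  have := card_partition partQ; rewrite (eq_bigr (fun _ => 1%N) cY) sum1_card => hh.
  by rewrite -hh ltnn in Q2.
have addB : forall w z, w \in B -> z \in B -> (z.1 + w.1, z.2 + w.2)%R \in B.
  move=> w z Bw Bz; rewrite -trpE; apply: (clos _ _ (0, 0)%R) => //.
    exact: (subsetP (base_sub p) _ (trp_in w)).
  by rewrite trpE /= !add0r; case: w Bw.
have mulB : forall k z, z \in B -> (k * z.1, k * z.2)%R \in B.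
  move=> k z Bz; rewrite (Fp_val k) !mulr_natl; elim: (val k) => [|n IH].
    by rewrite !mulr0n.
  by rewrite !mulrSr; exact: (addB z (z.1 *+ n, z.2 *+ n)%R Bz IH).
have swB : forall z, z \in B -> (z.2, z.1) \in B.
  move=> z Bz; rewrite -swpE; apply: (clos _ (swp_in p) (0, 0)%R) => //.
  by rewrite swpE.
have two0 : (2%:R : 'F_p)%R != 0%R by apply: Fp_nat_neq0 => //; lia.
have three0 : (3%:R : 'F_p)%R != 0%R by apply: Fp_nat_neq0 => //; lia.
have d4 : pc (affp (2%:R ^+ 2)%R 0%R) 1%g \in wrS2 p.
  by apply: (subsetP (base_sub p)); apply: pc_in; [exact: affp_Hqr | exact: Hqr1].
have [u u0 Bu] : exists2 u : 'F_p, u != 0%R & (u, 0%R) \in B.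
  case: (boolP [exists z, (z \in B) && (z != (0, 0)%R)]); last first.
    move=> h; exfalso; apply: single => z Bz; apply/eqP; move: h; rewrite negb_exists.
    by move/forallP/(_ z); rewrite Bz /= negbK.
  case/existsP => [[v1 v2] /andP [Bv nv]].
  case: (eqVneq v2 0%R) => [v20|v20].
    exists v1; last by rewrite -v20.
    by apply: contraNneq nv => v10; rewrite v10 v20.
  case: (eqVneq v1 0%R) => [v10|v10].
    by exists v2 => //; rewrite -v10; exact: (swB _ Bv).
  have h4 : pc (affp (2%:R ^+ 2)%R 0%R) 1%g (v1, v2) \in B.
    apply: (clos _ d4 _ Bo) => //.
    by rewrite pcE /= affpE ?expf_neq0 // mulr0 add0r perm1.
  rewrite pcE /= affpE ?expf_neq0 // perm1 in h4.
  have := addB _ _ (mulB (-1)%R _ Bv) h4; rewrite /=.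
  have -> : (2%:R ^+ 2 * v1 + 0 + -1 * v1 = 3%:R * v1 :> 'F_p)%R.
    by ring.
  have -> : (v2 + -1 * v2 = 0 :> 'F_p)%R by ring.
  by move=> h; exists (3%:R * v1)%R => //; rewrite mulf_neq0.
apply: allQ => [[x y]].
have hx : (x, 0%R) \in B.
  by have := mulB (x / u)%R _ Bu; rewrite /= mulr0 divfK.
have hy : (y, 0%R) \in B.
  by have := mulB (y / u)%R _ Bu; rewrite /= mulr0 divfK.
by have := addB _ _ (swB _ hy) hx; rewrite /= addr0 add0r.
Qed.


Theorem mainTheorem8 (p : nat) (hp : prime p) (hp5 : 5 <= p) :
  [/\ group_set (wrS2 p),
      #|[set: 'F_p * 'F_p]| = p ^ 2,
      [primitive wrS2 p, on [set: 'F_p * 'F_p] | 'P],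
      (forall g, g \in wrS2 p -> perm_imprimitive g) &
      [/\ group_set (baseHH p), (baseHH p <| wrS2 p)%g,
          #|wrS2 p : baseHH p|%g = 2 & group_imprimitive (baseHH p)]].
Proof.
split.
- exact: wrS2_gs.
- exact: card_sq.
- exact: prim.
- move=> g; exact: wr_imprim.
- split; [exact: base_gs | exact: base_normal (prime_gt1 hp)
         | exact: index_base (prime_gt1 hp) | exact: base_imprim].
Qed.
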